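(* Let $K$ be a commutative field and $q\in K$. On $\mathcal{H}_{\mathcal{PP}}$ define the bilinear form $\langle-,-\rangle_q$ by, for plane posets $P,Q$, $$\langle P,Q\rangle_q=\begin{cases}q^{\phi(P,Q)}&\text{if }\iota(P)\leq Q,\\ 0&\text{otherwise,}\end{cases}$$ where, for $P,Q$ of the same cardinality, $$\phi(P,Q)=\sharp\{(x,y)\in P^2\mid x<_r y\text{ and }\theta_{P,Q}(x)<_h\theta_{P,Q}(y)\}+\sharp\{(x,y)\in P^2\mid x<_h y\text{ and }\theta_{P,Q}(x)<_r\theta_{P,Q}(y)\}$$ (with $q^0=1$). Then $\langle-,-\rangle_q$ is symmetric and is a Hopf pairing on $(\mathcal{H}_{\mathcal{PP}},m,\Delta_q)$, i.e. $\langle xy,z\rangle_q=\langle x\otimes y,\Delta_q(z)\rangle_q$ for all $x,y,z\in\mathcal{H}_{\mathcal{PP}}$ (where $\langle a\otimes b,c\otimes d\rangle_q=\langle a,c\rangle_q\langle b,d\rangle_q$). Moreover, it is nondegenerate if and only if $q\neq 0$.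
   Context: A plane poset is a finite set with two partial orders $\leq_h,\leq_r$ such that two distinct elements are $\leq_h$-comparable iff they are not $\leq_r$-comparable, considered up to isomorphism; $\mathcal{H}_{\mathcal{PP}}$ is the $K$-vector space with basis the isomorphism classes of plane posets, the empty one denoted $1$. On a plane poset, $x\leq y$ iff ($x\leq_h y$ or $x\leq_r y$) is a total order (known fact). For $P,Q$ of the same cardinality, $\theta_{P,Q}$ is the increasing bijection $P\to Q$, and $P\leq Q$ means: for all $x,y\in P$, $\theta_{P,Q}(x)\leq_h\theta_{P,Q}(y)$ in $Q$ implies $x\leq_h y$ in $P$ ($\leq$ only holds between posets of equal cardinality). $\iota(P)=(P,\leq_r,\leq_h)$. The product $m$: $PQ$ is the plane poset on $P\sqcup Q$ with $P,Q$ plane subposets, no $\leq_h$-comparability between $P$ and $Q$, and $x<_r y$ for $x\in P,y\in Q$, extended bilinearly. A biideal of $P$ is a subset $I$ with $x\in I$ and ($x\leq_h y$ or $x\leq_r y$) implying $y\in I$. The coproduct is $\Delta_q(P)=\sum_{I\text{ biideal of }P}q^{h(P\setminus I,I)}(P\setminus I)\otimes I$ with $h(A,B)=\sharp\{(x,y)\in A\times B\mid x<_h y\}$, $P\setminus I$ and $I$ carrying the restricted orders. *)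

(* Defs.v *)
From mathcomp Require Import all_boot all_order all_algebra.
Set Implicit Arguments. Unset Strict Implicit. Unset Printing Implicit Defensive.
Import GRing.Theory.
Local Open Scope ring_scope.

Record rawPP := RawPP {
  car : finType;
  leh : rel car;
  ler : rel car }.

Definition partial_order (T : finType) (le : rel T) : bool :=
  [forall x, le x x] &&
  [forall x, forall y, (le x y && le y x) ==> (x == y)] &&
  [forall x, forall y, forall z, (le x y && le y z) ==> le x z].

Definition plane_poset (P : rawPP) : Prop :=
  [/\ partial_order (@leh P), partial_order (@ler P) &
      forall x y : car P, x != y ->
        (leh x y || leh y x) = ~~ (ler x y || ler y x)].

Definition lth (P : rawPP) (x y : car P) := leh x y && (x != y).
Definition ltr (P : rawPP) (x y : car P) := ler x y && (x != y).

Definition pp_iota (P : rawPP) : rawPP := @RawPP (car P) (@ler P) (@leh P).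

(* strict total order x < y iff (x <=_h y or x <=_r y) and x <> y;
   rank x = number of elements strictly below x *)
Definition rank (P : rawPP) (x : car P) : nat :=
  #|[set y : car P | (leh y x || ler y x) && (y != x)]|.

(* theta_{P,Q}: the increasing bijection P -> Q (defined when #|P| = #|Q|):
   x is sent to the element of Q of the same rank. *)
Definition theta (P Q : rawPP) (x : car P) : option (car Q) :=
  [pick y : car Q | rank y == rank x].

Definition theta_rel (P Q : rawPP) (r : rel (car Q)) (x y : car P) : bool :=
  match @theta P Q x, @theta P Q y with
  | Some a, Some b => r a b
  | _, _ => false
  end.

Definition ppleq (P Q : rawPP) : bool :=
  (#|car P| == #|car Q|) &&
  [forall x : car P, forall y : car P,
     @theta_rel P Q (@leh Q) x y ==> leh x y].

Definition phi (P Q : rawPP) : nat :=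
  #|[set p : car P * car P | ltr p.1 p.2 && @theta_rel P Q (@lth Q) p.1 p.2]| +
  #|[set p : car P * car P | lth p.1 p.2 && @theta_rel P Q (@ltr Q) p.1 p.2]|.

Definition pairing (K : fieldType) (q : K) (P Q : rawPP) : K :=
  if ppleq (pp_iota P) Q then q ^+ phi P Q else 0.

Definition ppmul_h (P Q : rawPP) (a b : car P + car Q) : bool :=
  match a, b with
  | inl x, inl y => leh x y
  | inr x, inr y => leh x y
  | _, _ => false
  end.
Definition ppmul_r (P Q : rawPP) (a b : car P + car Q) : bool :=
  match a, b with
  | inl x, inl y => ler x y
  | inr x, inr y => ler x y
  | inl _, inr _ => true
  | inr _, inl _ => false
  end.
Definition ppmul (P Q : rawPP) : rawPP :=
  @RawPP (car P + car Q)%type (@ppmul_h P Q) (@ppmul_r P Q).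

Definition restrict (P : rawPP) (A : {set car P}) : rawPP :=
  @RawPP {x : car P | x \in A}
    (fun a b => leh (val a) (val b)) (fun a b => ler (val a) (val b)).

Definition biideal (P : rawPP) (I : {set car P}) : bool :=
  [forall x, forall y, ((x \in I) && (leh x y || ler x y)) ==> (y \in I)].

Definition hcount (P : rawPP) (A B : {set car P}) : nat :=
  #|[set p : car P * car P | [&& p.1 \in A, p.2 \in B & lth p.1 p.2]]|.

(* <x (x) y, Delta_q(R)>_q for basis elements x = P, y = Q *)
Definition pairing_coprod (K : fieldType) (q : K) (P Q R : rawPP) : K :=
  \sum_(I : {set car R} | biideal I)
     q ^+ hcount (~: I) I * (pairing q P (restrict (~: I)) * pairing q Q (restrict I)).

Definition pp_iso (P Q : rawPP) : Prop :=
  exists f : car P -> car Q, bijective f /\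
    forall x y, leh (f x) (f y) = leh x y /\ ler (f x) (f y) = ler x y.

Definition empty_pp : rawPP := @RawPP void (fun _ _ => false) (fun _ _ => false).

(* An element of H_PP, written as sum_i c_i [P_i] with the P_i plane posets
   in pairwise distinct isomorphism classes; it is nonzero iff some c_i != 0. *)
Definition vec_repr (K : fieldType) (s : seq (K * rawPP)) : Prop :=
  (forall i, (i < size s)%N -> plane_poset (nth (0, empty_pp) s i).2) /\
  (forall i j, (i < j < size s)%N ->
     ~ pp_iso (nth (0, empty_pp) s i).2 (nth (0, empty_pp) s j).2).

Definition vec_nonzero (K : fieldType) (s : seq (K * rawPP)) : Prop :=
  exists2 i, (i < size s)%N & (nth (0, empty_pp) s i).1 != 0.

Definition pp_nondegenerate (K : fieldType) (q : K) : Prop :=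
  (forall s : seq (K * rawPP), vec_repr s -> vec_nonzero s ->
     exists Q, plane_poset Q /\ \sum_(c <- s) c.1 * pairing q c.2 Q != 0) /\
  (forall s : seq (K * rawPP), vec_repr s -> vec_nonzero s ->
     exists P, plane_poset P /\ \sum_(c <- s) c.1 * pairing q P c.2 != 0).

(* Main.v *)
Require Import Defs.
From mathcomp Require Import all_boot all_order all_algebra.
Import GRing.Theory.
Local Open Scope ring_scope.
From mathcomp Require Import zify.
Set Implicit Arguments. Unset Strict Implicit. Unset Printing Implicit Defensive.

Local Close Scope ring_scope.

Section PO.
Variable (T : finType) (le : rel T).
Lemma po_refl : partial_order le -> forall x, le x x.
Proof. by case/andP=> /andP [/forallP H _ _]. Qed.
Lemma po_anti : partial_order le -> forall x y, le x y -> le y x -> x = y.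
Proof.
case/andP=> /andP [_ /forallP H _] x y h1 h2.
by move: (H x) => /forallP /(_ y) /implyP /(_ (introT andP (conj h1 h2))) /eqP.
Qed.
Lemma po_trans : partial_order le -> forall x y z, le x y -> le y z -> le x z.
Proof.
case/andP=> _ /forallP H x y z h1 h2.
by move: (H x) => /forallP /(_ y) /forallP /(_ z) /implyP; apply; rewrite h1 h2.
Qed.
Lemma po_intro : (forall x, le x x) -> (forall x y, le x y -> le y x -> x = y) ->
  (forall x y z, le x y -> le y z -> le x z) -> partial_order le.
Proof.
move=> r a t; rewrite /partial_order; apply/andP; split; first (apply/andP; split).
- by apply/forallP.
- apply/forallP=> x; apply/forallP=> y; apply/implyP=> /andP [h1 h2].
  by apply/eqP; apply: a.
- apply/forallP=> x; apply/forallP=> y; apply/forallP=> z; apply/implyP=> /andP [h1 h2].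
  exact: t h1 h2.
Qed.
End PO.

Section Plane.
Variable P : rawPP.
Hypothesis hP : plane_poset P.
Local Notation T := (car P).

Lemma Hrefl (x : T) : leh x x. Proof. by case: hP => [h _ _]; apply: po_refl. Qed.
Lemma Rrefl (x : T) : ler x x. Proof. by case: hP => [_ h _]; apply: po_refl. Qed.
Lemma Hanti (x y : T) : leh x y -> leh y x -> x = y.
Proof. by case: hP => [h _ _]; apply: po_anti. Qed.
Lemma Ranti (x y : T) : ler x y -> ler y x -> x = y.
Proof. by case: hP => [_ h _]; apply: po_anti. Qed.
Lemma Htrans (x y z : T) : leh x y -> leh y z -> leh x z.
Proof. by case: hP => [h _ _]; apply: po_trans. Qed.
Lemma Rtrans (x y z : T) : ler x y -> ler y z -> ler x z.
Proof. by case: hP => [_ h _]; apply: po_trans. Qed.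
Lemma plane_ax (x y : T) : x != y -> (leh x y || leh y x) = ~~ (ler x y || ler y x).
Proof. by case: hP => [_ _ h]; apply: h. Qed.

Lemma hr_excl (x y : T) : x != y -> (leh x y || leh y x) -> (ler x y || ler y x) -> False.
Proof. by move=> /plane_ax -> /negP. Qed.

Lemma hr_comparable (x y : T) : x != y -> [|| leh x y, leh y x, ler x y | ler y x].
Proof.
move=> /plane_ax; case: (leh x y) => //=; case: (leh y x) => //= /esym /negbFE.
by [].
Qed.

Definition ltt (x y : T) := (leh x y || ler x y) && (x != y).

Lemma ltt_neq x y : ltt x y -> x != y. Proof. by case/andP. Qed.

Lemma ltt_asym x y : ltt x y -> ltt y x -> False.
Proof.
case/andP=> h1 n1 /andP [h2 _].
case/orP: h1 => a; case/orP: h2 => b.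
- by move: n1; rewrite (Hanti a b) eqxx.
- by apply: (hr_excl n1); rewrite ?a ?b ?orbT.
- by apply: (hr_excl n1); rewrite ?a ?b ?orbT.
- by move: n1; rewrite (Ranti a b) eqxx.
Qed.

Lemma ltt_trans x y z : ltt x y -> ltt y z -> ltt x z.
Proof.
move=> l1 l2.
have nxz : x != z.
  by apply/eqP=> e; subst z; apply: (ltt_asym l1 l2).
rewrite /ltt nxz andbT.
have nxy := ltt_neq l1; have nyz := ltt_neq l2.
case/andP: l1 => /orP [a|a] _; case/andP: l2 => /orP [b|b] _.
- by rewrite (Htrans a b).
- case/or4P: (hr_comparable nxz) => c; rewrite ?c ?orbT //.
  + by exfalso; apply: (hr_excl nyz); rewrite ?b ?orbT // (Htrans c a) ?orbT.
  + by exfalso; apply: (hr_excl nxy); rewrite ?a ?orbT // (Rtrans b c) ?orbT.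
- case/or4P: (hr_comparable nxz) => c; rewrite ?c ?orbT //.
  + by exfalso; apply: (hr_excl nxy); rewrite ?a ?orbT // (Htrans b c) ?orbT.
  + by exfalso; apply: (hr_excl nyz); rewrite ?b ?orbT // (Rtrans c a) ?orbT.
- by rewrite (Rtrans a b) orbT.
Qed.

Lemma ltt_irr x : ltt x x = false. Proof. by rewrite /ltt eqxx andbF. Qed.

Lemma ltt_total x y : x != y -> ltt x y || ltt y x.
Proof.
move=> n; rewrite /ltt n eq_sym n !andbT.
by case/or4P: (hr_comparable n) => ->; rewrite ?orbT.
Qed.

Lemma rankE (x : T) : @rank P x = #|[set y | ltt y x]|.
Proof. by []. Qed.

Lemma rank_lt x y : ltt x y -> @rank P x < @rank P y.
Proof.
move=> l; rewrite !rankE; apply: proper_card; apply/properP; split.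
  apply/subsetP=> z; rewrite !inE => l2; exact: ltt_trans l2 l.
by exists x; rewrite !inE ?ltt_irr.
Qed.

Lemma rank_ltE x y : (@rank P x < @rank P y) = ltt x y.
Proof.
apply/idP/idP; last exact: rank_lt.
move=> h; case: (eqVneq x y) => [e|n]; first by move: h; rewrite e ltnn.
case/orP: (ltt_total n) => // l; move: (rank_lt l) => h2.
by move: (ltn_trans h h2); rewrite ltnn.
Qed.

Lemma rank_inj : injective (@rank P).
Proof.
move=> x y e; apply/eqP; apply/negP=> /negP n.
by case/orP: (ltt_total n); rewrite -rank_ltE e ltnn.
Qed.

Lemma rank_bound x : @rank P x < #|T|.
Proof.
rewrite rankE -cardsT; apply: proper_card; apply/properP; split.
  exact: subsetT.
by exists x; rewrite !inE ?ltt_irr.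
Qed.

Definition rk (x : T) : 'I_#|T| := Ordinal (rank_bound x).

Lemma rk_bij : bijective rk.
Proof.
apply: inj_card_bij; last by rewrite card_ord.
by move=> x y /(congr1 val) /= /rank_inj.
Qed.

Lemma rank_surj k : k < #|T| -> exists x, @rank P x = k.
Proof.
move=> hk; case: rk_bij => g _ gK.
by exists (g (Ordinal hk)); move: (gK (Ordinal hk)) => /(congr1 val).
Qed.

End Plane.

Local Close Scope ring_scope.

Lemma rank_iota (P : rawPP) (x : car P) : @rank (pp_iota P) x = @rank P x.
Proof. by rewrite /rank; apply: eq_card => y; rewrite !inE /= orbC. Qed.

Lemma ltt_iota (P : rawPP) (x y : car P) : @ltt (pp_iota P) x y = @ltt P x y.
Proof. by rewrite /ltt /= orbC. Qed.

Lemma theta_iotaL (P Q : rawPP) x : @theta (pp_iota P) Q x = @theta P Q x.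
Proof. by rewrite /theta rank_iota. Qed.
Lemma theta_iotaR (P Q : rawPP) x : @theta P (pp_iota Q) x = @theta P Q x.
Proof. by rewrite /theta; apply: eq_pick => y; rewrite rank_iota. Qed.

Lemma plane_iota P : plane_poset P -> plane_poset (pp_iota P).
Proof.
case=> h r a; split => // x y n /=.
by rewrite (a x y n) negbK.
Qed.

Lemma plane_restrict P (A : {set car P}) : plane_poset P -> plane_poset (restrict A).
Proof.
move=> hP; split.
- apply: po_intro => /=.
  + by move=> x; apply: (Hrefl hP).
  + by move=> x y h1 h2; apply: val_inj; apply: (Hanti hP).
  + by move=> x y z; apply: (Htrans hP).
- apply: po_intro => /=.
  + by move=> x; apply: (Rrefl hP).
  + by move=> x y h1 h2; apply: val_inj; apply: (Ranti hP).
  + by move=> x y z; apply: (Rtrans hP).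
- move=> x y n /=; apply: (plane_ax hP).
  by rewrite val_eqE.
Qed.

Lemma card_restrict P (A : {set car P}) : #|car (restrict A)| = #|A|.
Proof. by rewrite /= card_sig. Qed.

Lemma plane_ppmul P Q : plane_poset P -> plane_poset Q -> plane_poset (ppmul P Q).
Proof.
move=> hP hQ; split.
- apply: po_intro => /=.
  + by case=> x /=; [apply: (Hrefl hP)|apply: (Hrefl hQ)].
  + case=> x; case=> y //= h1 h2; first by rewrite (Hanti hP h1 h2).
    by rewrite (Hanti hQ h1 h2).
  + by case=> x; case=> y; case=> z //=; [apply: (Htrans hP)|apply: (Htrans hQ)].
- apply: po_intro => /=.
  + by case=> x /=; [apply: (Rrefl hP)|apply: (Rrefl hQ)].
  + case=> x; case=> y //= h1 h2; first by rewrite (Ranti hP h1 h2).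
    by rewrite (Ranti hQ h1 h2).
  + by case=> x; case=> y; case=> z //=; [apply: (Rtrans hP)|apply: (Rtrans hQ)].
- case=> x; case=> y //= n.
  + by apply: (plane_ax hP); apply: contra n => /eqP ->.
  + by apply: (plane_ax hQ); apply: contra n => /eqP ->.
Qed.

Lemma card_ppmul P Q : #|car (ppmul P Q)| = #|car P| + #|car Q|.
Proof. by rewrite card_sum. Qed.

Lemma theta_unique P Q (x : car P) (y : car Q) :
  plane_poset Q -> @rank Q y = @rank P x -> @theta P Q x = Some y.
Proof.
move=> hQ e; rewrite /theta; case: pickP => [z /eqP hz|H].
  by congr Some; apply: (rank_inj hQ); rewrite hz e.
by move: (H y); rewrite e eqxx.
Qed.

Lemma theta_fun P Q : plane_poset P -> plane_poset Q -> #|car P| = #|car Q| ->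
  exists f : car P -> car Q, [/\ bijective f, forall x, @theta P Q x = Some (f x) &
     forall x, @rank Q (f x) = @rank P x].
Proof.
move=> hP hQ e.
have ex : forall x : car P, exists y : car Q, @rank Q y == @rank P x.
  move=> x; have hb := rank_bound x; rewrite e in hb.
  by case: (rank_surj hQ hb) => y hy; exists y; rewrite hy.
pose f x := xchoose (ex x).
have fr : forall x, @rank Q (f x) = @rank P x by move=> x; apply/eqP; exact: (xchooseP (ex x)).
exists f; split => //.
- apply: inj_card_bij; last by rewrite e.
  by move=> x y h; apply: (rank_inj hP); rewrite -!fr h.
- by move=> x; apply: theta_unique.
Qed.

Lemma ltt_f P Q (f : car P -> car Q) : plane_poset P -> plane_poset Q ->
  (forall x, @rank Q (f x) = @rank P x) -> forall x y, ltt (f x) (f y) = ltt x y.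
Proof. by move=> hP hQ fr x y; rewrite -(rank_ltE hP) -(rank_ltE hQ) !fr. Qed.

Lemma theta_relE P Q (f : car P -> car Q) r x y :
  (forall x, @theta P Q x = Some (f x)) -> @theta_rel P Q r x y = r (f x) (f y).
Proof. by move=> H; rewrite /theta_rel !H. Qed.

Lemma card_setE (T : finType) (F : pred T) : #|[set x | F x]| = \sum_x (F x : nat).
Proof.
rewrite cardsE -sum1_card big_mkcond /=; apply: eq_bigr => x _.
by rewrite unfold_in; case: (F x).
Qed.

Lemma card_pairE (T : finType) (F : T -> T -> bool) :
  #|[set p : T * T | F p.1 p.2]| = \sum_x \sum_y (F x y : nat).
Proof. by rewrite card_setE pair_big. Qed.

Lemma sum_reindex (T U : finType) (f : T -> U) (F : U -> nat) :
  bijective f -> \sum_x F x = \sum_x F (f x).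
Proof. by move=> b; apply: (reindex f); apply: onW_bij. Qed.


Local Close Scope ring_scope.

Lemma sum2_reindex (T U : finType) (f : T -> U) (F : U -> U -> nat) :
  bijective f -> \sum_a \sum_b F a b = \sum_x \sum_y F (f x) (f y).
Proof.
move=> b; rewrite (sum_reindex _ b); apply: eq_bigr => x _.
by rewrite (sum_reindex _ b).
Qed.

Lemma theta_funL P Q : plane_poset P -> plane_poset Q -> #|car P| = #|car Q| ->
  exists f : car P -> car Q, exists g : car Q -> car P,
  [/\ cancel f g, cancel g f, forall x, @theta P Q x = Some (f x),
     forall y, @theta Q P y = Some (g y) & forall x, @rank Q (f x) = @rank P x].
Proof.
move=> hP hQ e; case: (theta_fun hP hQ e) => f [[g fK gK] th fr].
exists f, g; split => // y.
by apply: theta_unique => //; rewrite -fr gK.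
Qed.

Lemma ppleq_sym P Q : plane_poset P -> plane_poset Q ->
  ppleq (pp_iota P) Q = ppleq (pp_iota Q) P.
Proof.
move=> hP hQ; rewrite /ppleq /=.
case: (eqVneq #|car P| #|car Q|) => e; last by [].
rewrite /=.
case: (theta_funL hP hQ e) => f [g [fK gK th tg fr]].
have thi : forall x, @theta (pp_iota P) Q x = Some (f x) by move=> x; rewrite theta_iotaL.
have tgi : forall y, @theta (pp_iota Q) P y = Some (g y) by move=> x; rewrite theta_iotaL.
have lf := ltt_f hP hQ fr.
apply/idP/idP => /forallP H; apply/forallP => a; apply/forallP => b; apply/implyP;
  rewrite ?(theta_relE _ _ _ thi) ?(theta_relE _ _ _ tgi) => /= hl.
- rewrite -(gK a) -(gK b); set x := g a in hl *; set y := g b in hl *.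
  case: (eqVneq x y) => [<-|nxy]; first exact: (Rrefl hQ).
  have : ltt x y by rewrite /ltt hl nxy.
  rewrite -lf => /andP [/orP [h|h] _] //.
  move: (H x) => /forallP /(_ y) /implyP; rewrite (theta_relE _ _ _ thi) => /(_ h) hr.
  by exfalso; apply: (hr_excl hP nxy); rewrite ?hl ?hr ?orbT.
- case: (eqVneq a b) => [<-|nab]; first exact: (Rrefl hP).
  have nf : f a != f b by apply: contra nab => /eqP /(can_inj fK) ->.
  have : ltt (f a) (f b) by rewrite /ltt hl nf.
  rewrite lf => /andP [/orP [h|h] _] //.
  move: (H (f a)) => /forallP /(_ (f b)) /implyP; rewrite (theta_relE _ _ _ tgi) !fK.
  move=> /(_ h) hr.
  by exfalso; apply: (hr_excl hQ nf); rewrite ?hl ?hr ?orbT.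
Qed.

Lemma phiE P Q (f : car P -> car Q) : (forall x, @theta P Q x = Some (f x)) ->
  phi P Q = \sum_x \sum_y (ltr x y && lth (f x) (f y) : nat) +
            \sum_x \sum_y (lth x y && ltr (f x) (f y) : nat).
Proof.
move=> th; rewrite /phi (card_pairE (fun x y => @ltr P x y && @theta_rel P Q (@lth Q) x y))
  (card_pairE (fun x y => @lth P x y && @theta_rel P Q (@ltr Q) x y)).
by congr addn; apply: eq_bigr => x _; apply: eq_bigr => y _; rewrite (theta_relE _ _ _ th).
Qed.

Lemma phi_sym P Q : plane_poset P -> plane_poset Q -> #|car P| = #|car Q| ->
  phi P Q = phi Q P.
Proof.
move=> hP hQ e; case: (theta_funL hP hQ e) => f [g [fK gK th tg fr]].
rewrite (phiE th) (phiE tg) addnC.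
have bf : bijective f by exists g.
congr addn; rewrite (sum2_reindex (fun a b => _) bf);
  by apply: eq_bigr => x _; apply: eq_bigr => y _; rewrite !fK andbC.
Qed.

Local Open Scope ring_scope.
Lemma pairing_sym (K : fieldType) (q : K) P Q : plane_poset P -> plane_poset Q ->
  pairing q P Q = pairing q Q P.
Proof.
move=> hP hQ; rewrite /pairing (ppleq_sym hP hQ).
case h: (ppleq (pp_iota Q) P) => //.
move: h; rewrite /ppleq /= => /andP [/eqP e _].
by rewrite (phi_sym hP hQ (esym e)).
Qed.

Local Close Scope ring_scope.

Lemma rank_sum P (x : car P) : @rank P x = \sum_y (@ltt P y x : nat).
Proof. by rewrite rankE (card_setE (fun y => @ltt P y x)). Qed.

Lemma biidealP R (I : {set car R}) x y : biideal I -> x \in I -> (leh x y || ler x y) -> y \in I.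
Proof.
move=> /forallP /(_ x) /forallP /(_ y) /implyP H xi h; apply: H.
by rewrite xi h.
Qed.

Lemma biideal_uniq R (I J : {set car R}) : plane_poset R -> biideal I -> biideal J ->
  #|I| = #|J| -> I = J.
Proof.
move=> hR bI bJ e.
have key : forall I J : {set car R}, biideal I -> biideal J -> ~~ (I \subset J) -> J \subset I.
  move=> I1 J1 b1 b2 /subsetPn [x xI xJ]; apply/subsetP => y yJ.
  case: (eqVneq x y) => [exy|nxy]; first by move: xJ; rewrite exy yJ.
  case/or4P: (hr_comparable hR nxy) => h.
  - by apply: (biidealP b1 xI); rewrite h.
  - by move: xJ; rewrite (biidealP b2 yJ) // h.
  - by apply: (biidealP b1 xI); rewrite h orbT.
  - by move: xJ; rewrite (biidealP b2 yJ) // h orbT.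
case s: (I \subset J).
  by apply/eqP; rewrite eqEcard s e leqnn.
have s2 := key I J bI bJ (negbT s).
by apply/eqP; rewrite eq_sym eqEcard s2 e leqnn.
Qed.

Lemma sum_lt_ord (N n : nat) : \sum_(i < N) (i < n : nat) = minn n N.
Proof.
elim: N => [|N IH]; first by rewrite big_ord0; lia.
rewrite big_ord_recr /= IH.
case: (ltnP N n) => h /=; lia.
Qed.

Lemma ltt_inl P Q (x y : car P) : @ltt (ppmul P Q) (inl x) (inl y) = ltt x y.
Proof. by []. Qed.
Lemma ltt_inr P Q (x y : car Q) : @ltt (ppmul P Q) (inr x) (inr y) = ltt x y.
Proof. by []. Qed.
Lemma ltt_lr P Q (x : car P) (y : car Q) : @ltt (ppmul P Q) (inl x) (inr y) = true.
Proof. by []. Qed.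
Lemma ltt_rl P Q (x : car P) (y : car Q) : @ltt (ppmul P Q) (inr y) (inl x) = false.
Proof. by []. Qed.

Lemma rank_inl P Q (x : car P) : @rank (ppmul P Q) (inl x) = @rank P x.
Proof.
rewrite !rank_sum big_sumType /=.
rewrite [X in _ + X]big1 ?addn0 //.
Qed.

Lemma rank_inr P Q (y : car Q) : @rank (ppmul P Q) (inr y) = #|car P| + @rank Q y.
Proof.
rewrite !rank_sum big_sumType /=; congr addn.
by rewrite -sum1_card; apply: eq_bigr.
Qed.

Local Close Scope ring_scope.

Section Seg.
Variable R : rawPP.
Hypothesis hR : plane_poset R.
Variable n : nat.
Hypothesis hn : n <= #|car R|.

Definition I0 : {set car R} := [set y | n <= @rank R y].

Lemma I0_biideal : biideal I0.
Proof.
apply/forallP=> x; apply/forallP=> y; apply/implyP=> /andP [].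
rewrite !inE => hx h.
case: (eqVneq x y) => [<-|nxy] //.
have : ltt x y by rewrite /ltt h nxy.
rewrite -(rank_ltE hR) => lt; lia.
Qed.

Lemma card_cI0 : #|~: I0| = n.
Proof.
have -> : ~: I0 = [set y | @rank R y < n] by apply/setP => y; rewrite !inE -ltnNge.
rewrite (card_setE (fun y => @rank R y < n)).
case: (rk_bij hR) => g gK Kg.
rewrite (sum_reindex _ (Bijective Kg gK)) /=.
have -> : \sum_(i < #|car R|) (@rank R (g i) < n : nat) = \sum_(i < #|car R|) (i < n : nat).
  apply: eq_bigr => i _; congr (nat_of_bool (_ < n)).
  by move: (Kg i) => /(congr1 val).
rewrite sum_lt_ord; lia.
Qed.

Lemma card_I0 : #|I0| = #|car R| - n.
Proof. by rewrite -card_cI0 -(cardsC I0) addnK. Qed.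

Definition RA := restrict (~: I0).
Definition RB := restrict I0.

Lemma rank_A (a : car RA) : @rank RA a = @rank R (val a).
Proof.
rewrite !rank_sum.
have -> : \sum_(y : car RA) (@ltt RA y a : nat) = \sum_(y : car RA) (@ltt R (val y) (val a) : nat).
  by apply: eq_bigr => y _.
rewrite -(big_sub (~: I0) (fun y => (@ltt R y (val a) : nat))).
rewrite big_mkcond /=; apply: eq_bigr => y _.
case: ifP => // /negbT; rewrite !inE negbK => hy.
have := valP a; rewrite /= !inE -ltnNge => ha.
case h: (ltt y (val a)) => //.
move: h; rewrite -(rank_ltE hR) => h.
have : @rank R (val a) < n := ha. lia.
Qed.

Lemma rank_B (b : car RB) : @rank R (val b) = n + @rank RB b.
Proof.
rewrite !rank_sum.
have -> : \sum_(y : car RB) (@ltt RB y b : nat) = \sum_(y : car RB) (@ltt R (val y) (val b) : nat).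
  by apply: eq_bigr => y _.
rewrite -(big_sub I0 (fun y => (@ltt R y (val b) : nat))).
rewrite [LHS](bigID (fun y => y \in I0)) /= addnC; congr addn.
rewrite -card_cI0 -sum1_card; apply: eq_big => y; first by rewrite !inE.
move=> hy; have := valP b; rewrite /= !inE => hb.
have hb2 : n <= @rank R (val b) := hb.
move: hy; rewrite inE -ltnNge => hy.
have : @rank R y < @rank R (val b) by lia.
by rewrite (rank_ltE hR) => ->.
Qed.

End Seg.

Local Close Scope ring_scope.

Lemma sum_in_sub (T : finType) (A : {set T}) (F : T -> nat) :
  \sum_x ((x \in A) * F x) = \sum_(a : {x | x \in A}) F (val a).
Proof.
rewrite -big_sub [RHS]big_mkcond; apply: eq_bigr => x _.
by case: (x \in A); rewrite ?mul1n ?mul0n.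
Qed.

Lemma sum2_sumType (T U : finType) (F : T + U -> T + U -> nat) :
  \sum_u \sum_v F u v = (\sum_x \sum_y F (inl x) (inl y) + \sum_x \sum_y F (inl x) (inr y)
    + \sum_y \sum_x F (inr y) (inl x) + \sum_y \sum_y' F (inr y) (inr y'))%N.
Proof.
rewrite big_sumType /=.
rewrite (eq_bigr (fun x => \sum_y F (inl x) (inl y) + \sum_y F (inl x) (inr y))%N);
  last by move=> x _; rewrite big_sumType.
rewrite [X in (_ + X)%N](eq_bigr (fun x => \sum_y F (inr x) (inl y) + \sum_y F (inr x) (inr y))%N);
  last by move=> x _; rewrite big_sumType.
by rewrite !big_split /= !addnA.
Qed.

Section Hopf.
Variables P Q R : rawPP.
Hypotheses (hP : plane_poset P) (hQ : plane_poset Q) (hR : plane_poset R).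
Hypothesis hN : #|car R| = #|car P| + #|car Q|.
Let n := #|car P|.
Let hn : n <= #|car R|. Proof. by rewrite hN /n leq_addr. Qed.
Let A := RA R n.
Let B := RB R n.
Let hA : plane_poset A. Proof. exact: plane_restrict. Qed.
Let hB : plane_poset B. Proof. exact: plane_restrict. Qed.
Let cA : #|car P| = #|car A|.
Proof. by rewrite /A /RA card_restrict card_cI0. Qed.
Let cB : #|car Q| = #|car B|.
Proof. by rewrite /B /RB card_restrict card_I0 //; rewrite hN /n addKn. Qed.

Lemma hopf_data : exists fP : car P -> car A, exists fQ : car Q -> car B,
  [/\ bijective fP, bijective fQ, forall x, @theta P A x = Some (fP x),
      forall y, @theta Q B y = Some (fQ y) &
      forall u, @theta (ppmul P Q) R u =
         Some (match u with inl x => val (fP x) | inr y => val (fQ y) end)].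
Proof.
case: (theta_fun hP hA cA) => fP [bP thP rP].
case: (theta_fun hQ hB cB) => fQ [bQ thQ rQ].
exists fP, fQ; split => //; case=> [x|y]; apply: theta_unique => //.
- by rewrite rank_inl -rP (rank_A hR hn).
- by rewrite rank_inr (rank_B hR hn) rQ.
Qed.


Lemma lth_res (T : rawPP) (S : {set car T}) (a b : car (restrict S)) :
  @lth (restrict S) a b = @lth T (val a) (val b).
Proof. by rewrite /lth /= val_eqE. Qed.
Lemma ltr_res (T : rawPP) (S : {set car T}) (a b : car (restrict S)) :
  @ltr (restrict S) a b = @ltr T (val a) (val b).
Proof. by rewrite /ltr /= val_eqE. Qed.

Local Open Scope ring_scope.
Lemma hopf_eq (K : fieldType) (q : K) :
  pairing q (ppmul P Q) R = q ^+ hcount (~: I0 R n) (I0 R n) * (pairing q P A * pairing q Q B).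
Proof.
case: hopf_data => fP [fQ [bP bQ thP thQ thg]].
pose g (u : car (ppmul P Q)) : car R :=
  match u with inl x => val (fP x) | inr y => val (fQ y) end.
have thg' : forall u, @theta (ppmul P Q) R u = Some (g u) by exact: thg.
have thgi : forall u, @theta (pp_iota (ppmul P Q)) R u = Some (g u).
  by move=> u; rewrite theta_iotaL.
have thPi : forall x, @theta (pp_iota P) A x = Some (fP x).
  by move=> u; rewrite theta_iotaL.
have thQi : forall x, @theta (pp_iota Q) B x = Some (fQ x).
  by move=> u; rewrite theta_iotaL.
have split_le : ppleq (pp_iota (ppmul P Q)) R = ppleq (pp_iota P) A && ppleq (pp_iota Q) B.
  rewrite /ppleq /= -cA -cB card_sum hN !eqxx /=.
  apply/idP/idP.
  - move/forallP => H; apply/andP; split; apply/forallP => x; apply/forallP => y.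
    + move: (H (inl x)) => /forallP /(_ (inl y)).
      by rewrite (theta_relE _ _ _ thgi) (theta_relE _ _ _ thPi).
    + move: (H (inr x)) => /forallP /(_ (inr y)).
      by rewrite (theta_relE _ _ _ thgi) (theta_relE _ _ _ thQi).
  - case/andP => /forallP H1 /forallP H2.
    apply/forallP => -[x|y]; apply/forallP => -[x'|y'];
      rewrite (theta_relE _ _ _ thgi) /g /= ?implybT //.
    + by move: (H1 x) => /forallP /(_ x'); rewrite (theta_relE _ _ _ thPi).
    + apply/implyP => h; exfalso.
      have i1 := valP (fQ y); have i2 := valP (fP x').
      move: i2; rewrite /= inE (biidealP (I0_biideal hR hn) i1) //.
      by rewrite h.
    + by move: (H2 y) => /forallP /(_ y'); rewrite (theta_relE _ _ _ thQi).
  have HC : hcount (~: I0 R n) (I0 R n) =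
      \sum_x \sum_y (@lth R (val (fP x)) (val (fQ y)) : nat).
    rewrite /hcount (card_pairE (fun a b => [&& a \in ~: I0 R n, b \in I0 R n & @lth R a b])).
    rewrite (eq_bigr (fun a => (a \in ~: I0 R n) *
        \sum_b ((b \in I0 R n) * (@lth R a b : nat))))%N; last first.
      move=> a _; rewrite big_distrr /=; apply: eq_bigr => b _.
      by case: (a \in ~: I0 R n); case: (b \in I0 R n); rewrite /= ?mul1n ?mul0n.
    rewrite sum_in_sub.
    rewrite (eq_bigr (fun a => \sum_(b : {x | x \in I0 R n}) (@lth R (val a) (val b) : nat)));
      last by move=> a _; rewrite sum_in_sub.
    rewrite (sum_reindex _ bP); apply: eq_bigr => x _.
    by rewrite (sum_reindex _ bQ).
  have split_phi : phi (ppmul P Q) R = (phi P A + phi Q B + hcount (~: I0 R n) (I0 R n))%N.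
    rewrite (phiE thg') (phiE thP) (phiE thQ) HC !sum2_sumType.
    have ar : forall x y z w h : nat, (x + y + (z + w) + h = (x + h + 0 + z) + (y + 0 + 0 + w))%N.
      by move=> *; lia.
    rewrite ar; congr (_ + _ + _ + _ + (_ + _ + _ + _))%N.
    all: try (by apply: eq_bigr => x _; apply: eq_bigr => y _; rewrite /= ?lth_res ?ltr_res).
    all: try (by apply: big1 => x _; apply: big1 => y _).
  rewrite /pairing split_le split_phi.
  case: (ppleq (pp_iota P) A); case: (ppleq (pp_iota Q) B) => /=; rewrite ?mulr0 ?mul0r ?mulr0 //.
  by rewrite -!exprD addnC.
Qed.
End Hopf.

Local Open Scope ring_scope.
Lemma pairing_card (K : fieldType) (q : K) X Y :
  pairing q X Y != 0 -> #|car X| = #|car Y|.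
Proof.
rewrite /pairing /ppleq /=; case: (eqVneq #|car X| #|car Y|) => // _.
by rewrite /= eqxx.
Qed.

Lemma hopf (K : fieldType) (q : K) P Q R : plane_poset P -> plane_poset Q -> plane_poset R ->
  pairing q (ppmul P Q) R = pairing_coprod q P Q R.
Proof.
move=> hP hQ hR.
case: (eqVneq #|car R| (#|car P| + #|car Q|)%N) => e; last first.
  rewrite /pairing_coprod big1 => [|I bI].
    apply/eqP; apply: contraR e => /pairing_card <-.
    by rewrite /= card_sum.
  case: (eqVneq (pairing q P (restrict (~: I))) 0) => [->|n1]; first by rewrite !mul0r mulr0.
  case: (eqVneq (pairing q Q (restrict I)) 0) => [->|n2]; first by rewrite !mulr0.
  exfalso; move/eqP: e; apply.
  move: (pairing_card n1) (pairing_card n2); rewrite !card_restrict => -> ->.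
  by rewrite addnC cardsC.
have hn : (#|car P| <= #|car R|)%N by rewrite e leq_addr.
rewrite (hopf_eq hP hQ hR e) /pairing_coprod (bigD1 (I0 R #|car P|)) /=; last exact: I0_biideal.
rewrite big1 ?addr0 //.
move=> I /andP [bI nI].
case: (eqVneq (pairing q Q (restrict I)) 0) => [->|n2]; first by rewrite !mulr0.
exfalso; move/eqP: nI; apply; apply: (biideal_uniq hR bI (I0_biideal hR hn)).
move: (pairing_card n2); rewrite card_restrict card_I0 // e => <-.
by rewrite addKn.
Qed.

Local Close Scope ring_scope.

Definition mu (P : rawPP) := #|[set p : car P * car P | ler p.1 p.2]|.

Lemma lehE P (x y : car P) : plane_poset P -> x != y ->
  leh x y = ~~ (ler x y || ler y x) && ltt x y.
Proof.
move=> hP n; apply/idP/idP.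
- by move=> h; rewrite -(plane_ax hP n) h /= /ltt h n.
- case/andP => nr l; move: nr; rewrite -(plane_ax hP n) => /orP [//|h].
  exfalso; apply: (ltt_asym hP l); rewrite /ltt h /=.
  by rewrite eq_sym.
Qed.

Lemma pp_iso_sym P Q : pp_iso P Q -> pp_iso Q P.
Proof.
case=> f [[g fK gK] H]; exists g; split; first by exists f.
move=> a b; move: (H (g a) (g b)); rewrite !gK.
by case=> -> ->.
Qed.

Lemma ppleq_mu P Q : plane_poset P -> plane_poset Q ->
  ppleq (pp_iota P) (pp_iota Q) -> (mu Q <= mu P)%N /\ (mu Q = mu P -> pp_iso P Q).
Proof.
move=> hP hQ; rewrite /ppleq /= => /andP [/eqP e /forallP H].
case: (theta_funL hP hQ e) => f [g [fK gK th tg fr]].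
have thi : forall x, @theta (pp_iota P) (pp_iota Q) x = Some (f x).
  by move=> x; rewrite theta_iotaL theta_iotaR.
have H' : forall x y, ler (f x) (f y) -> ler x y.
  move=> x y; move: (H x) => /forallP /(_ y) /implyP.
  by rewrite (theta_relE _ _ _ thi).
have bf : bijective f by exists g.
pose S := [set p : car P * car P | ler (f p.1) (f p.2)].
pose T := [set p : car P * car P | ler p.1 p.2].
have cS : #|S| = mu Q.
  rewrite /S /mu (card_pairE (fun x y => ler (f x) (f y))).
  by rewrite (card_pairE (fun x y => ler x y)) (sum2_reindex (fun a b => ler a b) bf).
have sST : S \subset T by apply/subsetP => -[x y]; rewrite !inE; apply: H'.
split; first by rewrite -cS; apply: subset_leq_card.
move=> emu.
have eST : S = T by apply/eqP; rewrite eqEcard sST cS emu; exact: leqnn.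
have er : forall x y, ler (f x) (f y) = ler x y.
  by move=> x y; move/setP: eST => /(_ (x, y)); rewrite !inE.
exists f; split => // x y; split => //.
case: (eqVneq x y) => [<-|n]; first by rewrite !(Hrefl hP, Hrefl hQ).
have nf : f x != f y by apply: contra n => /eqP /(can_inj fK) ->.
by rewrite (lehE hP n) (lehE hQ nf) !er (ltt_f hP hQ fr).
Qed.

Local Open Scope ring_scope.

Lemma pairing_self (K : fieldType) (q : K) P : plane_poset P ->
  pairing q P (pp_iota P) = q ^+ phi P (pp_iota P).
Proof.
move=> hP; rewrite /pairing /ppleq eqxx /=.
have th : forall x, @theta (pp_iota P) (pp_iota P) x = Some x.
  by move=> x; apply: theta_unique; [exact: plane_iota|].
suff -> : [forall x, forall y, @theta_rel (pp_iota P) (pp_iota P) (@leh (pp_iota P)) x y ==>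
          @leh (pp_iota P) x y] by [].
apply/forallP => x; apply/forallP => y.
by rewrite (theta_relE _ _ _ th) implybb.
Qed.

Local Close Scope ring_scope.
Local Open Scope ring_scope.

Lemma nondeg_fwd (K : fieldType) (q : K) : q != 0 -> pp_nondegenerate q.
Proof.
move=> hq.
pose x0 := ((0 : K), empty_pp).
suff main : forall s : seq (K * rawPP), vec_repr s -> vec_nonzero s ->
     exists Q, plane_poset Q /\ (forall i, (i < size s)%N -> plane_poset (nth x0 s i).2) /\
        \sum_(c <- s) c.1 * pairing q c.2 Q != 0.
  split => s hs hnz; case: (main s hs hnz) => Q [hQ [hpl hsum]]; exists Q; split => //.
  rewrite (big_nth x0) big_mkord; rewrite (big_nth x0) big_mkord in hsum.
  rewrite (eq_bigr (fun i : 'I_(size s) => (nth x0 s i).1 * pairing q (nth x0 s i).2 Q)) //.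
  by move=> i _; rewrite (pairing_sym _ hQ (hpl i (ltn_ord i))).
move=> s [hpl hni] [i0 hi0 hc0].
pose c i := (nth x0 s i).1. pose PP i := (nth x0 s i).2.
have hpl' : forall i, (i < size s)%N -> plane_poset (PP i) by exact: hpl.
case: (@arg_maxnP _ (Ordinal hi0) (fun i : 'I_(size s) => c i != 0) (fun i => mu (PP i)) hc0)
  => j hcj Hmax.
have hj := hpl' j (ltn_ord j).
exists (pp_iota (PP j)); split; first exact: plane_iota.
split => //.
rewrite (big_nth x0) big_mkord (bigD1 j) //= big1 ?addr0.
  by rewrite (pairing_self _ hj) mulf_neq0 // expf_neq0.
move=> i nij.
case: (eqVneq (c i) 0) => [ci0|ci]; first by move: ci0; rewrite /c => ->; rewrite mul0r.
have hi := hpl' i (ltn_ord i).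
rewrite /pairing; case h: ppleq; last by rewrite mulr0.
exfalso.
case: (ppleq_mu hi hj h) => le1 iso.
have := Hmax i ci => /= le2.
have := iso (anti_leq (introT andP (conj le1 le2))) => hiso.
case: (ltngtP i j) => hij.
- by apply: (hni i j); rewrite ?hij ?ltn_ord.
- by apply: (hni j i); rewrite ?hij ?ltn_ord //; apply: pp_iso_sym.
- by move: nij; rewrite (val_inj hij) eqxx.
Qed.

Definition Lad : rawPP := @RawPP bool (fun x y => implb x y) (fun x y => x == y).

Lemma plane_Lad : plane_poset Lad.
Proof.
split.
- by apply: po_intro => /=; do ?case.
- by apply: po_intro => /=; do ?case.
- by do 2?case.
Qed.

Lemma pairing_Lad0 (K : fieldType) Q : plane_poset Q -> pairing (0 : K) Lad Q = 0.
Proof.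
move=> hQ; rewrite /pairing; case h: ppleq => //.
move: h; rewrite /ppleq => /andP [/eqP e /forallP H].
case: (theta_fun plane_Lad hQ e) => f [bf th fr].
have thi : forall x, @theta (pp_iota Lad) Q x = Some (f x) by move=> x; rewrite theta_iotaL.
have nh : leh (f false) (f true) = false.
  move: (H false) => /forallP /(_ true) /implyP; rewrite (theta_relE _ _ _ thi) /=.
  by case: leh => // /(_ isT).
have l : ltt (f false) (f true) by rewrite (ltt_f plane_Lad hQ fr).
have lr : ltr (f false) (f true).
  by move: l; rewrite /ltt /ltr nh.
have : phi Lad Q != 0%N.
  rewrite /phi addn_eq0 negb_and; apply/orP; right.
  rewrite -lt0n card_gt0; apply/set0Pn; exists (false, true).
  by rewrite inE /= (theta_relE _ _ _ th).
by rewrite expr0n => /negbTE ->.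
Qed.

Lemma nondeg_bwd (K : fieldType) (q : K) : pp_nondegenerate q -> q != 0.
Proof.
move=> [H _]; apply/negP => /eqP q0; subst q.
have hs : vec_repr [:: ((1 : K), Lad)].
  split; first by case => //= _; exact: plane_Lad.
  by move=> i j /= /andP [a b]; exfalso; lia.
have hnz : vec_nonzero [:: ((1 : K), Lad)] by exists 0%N => //=; exact: oner_neq0.
case: (H _ hs hnz) => Q [hQ].
by rewrite big_seq1 /= (pairing_Lad0 _ hQ) mulr0 eqxx.
Qed.

Local Open Scope ring_scope.

Theorem theorem23 (K : fieldType) (q : K) :
  (forall P Q : rawPP, plane_poset P -> plane_poset Q ->
     pairing q P Q = pairing q Q P) /\
  (forall P Q R : rawPP, plane_poset P -> plane_poset Q -> plane_poset R ->
     pairing q (ppmul P Q) R = pairing_coprod q P Q R) /\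
  (pp_nondegenerate q <-> q != 0).
Proof.
split; first by move=> P Q hP hQ; apply: pairing_sym.
split; first by move=> P Q R hP hQ hR; apply: hopf.
split; [exact: nondeg_bwd | exact: nondeg_fwd].
Qed.
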